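(* Let $G$ be a tree with $n\ge k\ge 1$ vertices and let $\mathcal C_0,\dots,\mathcal C_l$ be an optimal (minimum-length) spanning restricted transition walk with $k$ agents, so $l=h^r_k(G)$. Let $y$ be the vertex of $G$ that is encountered last, i.e. the unique vertex of $\mathcal C_j\setminus\mathcal C_{j-1}$ for the largest $j$ at which a vertex not occurring in $\mathcal C_0,\dots,\mathcal C_{j-1}$ appears, and let $x$ be a vertex of $\mathcal C_0$ farthest (in $G$) from $y$. Let $P_{xy}$ be the path of $G$ between $x$ and $y$. Then $l \ge (n-k)+\sum_{e\in E} d^k_{P_{xy}}(e)$.
   Context: All graphs are finite, simple, undirected. A configuration of $k$ agents is a $k$-tuple of pairwise distinct vertices of $G$ whose induced subgraph is connected (identified with its vertex set when convenient). Configurations $(v_1,\dots,v_k)$, $(v'_1,\dots,v'_k)$ are adjacent if for every $i$ either $v_i=v'_i$ or $(v_i,v'_i)\in E$. A restricted transition walk is a sequence of configurations $\mathcal C_0,\dots,\mathcal C_l$ such that consecutive configurations are adjacent and $\mathcal C_{t+1}$ contains exactly one vertex not in $\mathcal C_t$ (a $1$-transition edge); it is spanning if every vertex lies in some $\mathcal C_t$. $h^r_k(G)$ is the minimum length of a spanning restricted transition walk. For a tree $G$, a path $P$ in $G$ and $k\ge1$, define $d^k_P(e)\in\{0,1\}$ for every edge $e$: $d^k_P(e)=0$ if $e$ lies on $P$; otherwise write $e=(u,v)$ with $u$ closer to $P$ than $v$, let $T_P(e)$ be the component of $G-e$ containing $v$, rooted at $v$, and set $d^k_P(e)=1$ if $T_P(e)$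 has height at least $k-1$ (equivalently, some vertex $z$ of $T_P(e)$ has distance at least $k$ from $u$), and $d^k_P(e)=0$ otherwise. *)

(* Defs.v *)
From HB Require Import structures.
From mathcomp Require Import all_boot all_order.
Set Implicit Arguments. Unset Strict Implicit. Unset Printing Implicit Defensive.

Definition connected_graph (T : finType) (e : rel T) : Prop :=
  forall x y : T, connect e x y.

Definition acyclic_graph (T : finType) (e : rel T) : Prop :=
  forall c : seq T, uniq c -> 2 < size c -> ~~ cycle e c.

Definition is_tree (T : finType) (e : rel T) : Prop :=
  [/\ symmetric e, irreflexive e, connected_graph e & acyclic_graph e].

Definition walk_of_length (T : finType) (e : rel T) (m : nat) (u v : T) : bool :=
  [exists p : m.-tuple T, path e u p && (last u p == v)].

(* graph distance: least m such that a walk of length m from u to v exists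
   (every distance in a connected graph on #|T| vertices is < #|T|) *)
Definition gdist (T : finType) (e : rel T) (u v : T) : nat :=
  find (fun m => walk_of_length e m u v) (iota 0 #|T|).

Definition induced (T : finType) (e : rel T) (A : seq T) : rel T :=
  fun a b => [&& e a b, a \in A & b \in A].

Definition is_config (T : finType) (e : rel T) (k : nat) (C : k.-tuple T) : bool :=
  uniq C &&
  [forall a : T, forall b : T,
     (a \in C) ==> (b \in C) ==> connect (induced e C) a b].

Definition config_adj (T : finType) (e : rel T) (k : nat) (C D : k.-tuple T) : bool :=
  [forall i : 'I_k, (tnth C i == tnth D i) || e (tnth C i) (tnth D i)].

Definition one_transition (T : finType) (k : nat) (C D : k.-tuple T) : bool :=
  #|[set z : T | (z \in D) && (z \notin C)]| == 1.

Definition rstep (T : finType) (e : rel T) (k : nat) (C D : k.-tuple T) : bool :=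
  config_adj e C D && one_transition C D.

(* the walk C_0, ..., C_l is  c0 :: s ; its length is l = size s *)
Definition restricted_walk (T : finType) (e : rel T) (k : nat)
    (c0 : k.-tuple T) (s : seq (k.-tuple T)) : bool :=
  all (@is_config T e k) (c0 :: s) && path (@rstep T e k) c0 s.

Definition spanning (T : finType) (k : nat) (c0 : k.-tuple T) (s : seq (k.-tuple T)) : Prop :=
  forall z : T, has (fun C : k.-tuple T => z \in C) (c0 :: s).

Definition optimal_walk (T : finType) (e : rel T) (k : nat)
    (c0 : k.-tuple T) (s : seq (k.-tuple T)) : Prop :=
  [/\ restricted_walk e c0 s, spanning c0 s &
      forall (c0' : k.-tuple T) (s' : seq (k.-tuple T)),
        restricted_walk e c0' s' -> spanning c0' s' -> size s <= size s'].

Definition first_occ (T : finType) (k : nat) (c0 : k.-tuple T) (s : seq (k.-tuple T))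
    (z : T) : nat :=
  find (fun C : k.-tuple T => z \in C) (c0 :: s).

Definition is_simple_path (T : finType) (e : rel T) (x y : T) (p : seq T) : Prop :=
  [/\ path e x p, last x p = y & uniq (x :: p)].

Definition edge_on_path (T : finType) (x : T) (p : seq T) (a b : T) : bool :=
  infix [:: a; b] (x :: p) || infix [:: b; a] (x :: p).

Definition dist_to_path (T : finType) (e : rel T) (x : T) (p : seq T) (w : T) : nat :=
  \big[minn/#|T|]_(z <- x :: p) gdist e w z.

Definition cut_edge (T : finType) (e : rel T) (a b : T) : rel T :=
  fun c d => e c d && ~~ (((c == a) && (d == b)) || ((c == b) && (d == a))).

(* for the edge (u,v) with u closer to P: some z in the component T_P(e) of
   G - e containing v has distance >= k from u *)
Definition d_oriented (T : finType) (e : rel T) (k : nat) (u v : T) : bool :=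
  [exists z : T, connect (cut_edge e u v) v z && (k <= gdist e u z)].

(* d^k_P({a,b}) (symmetric in a b); P = x :: p *)
Definition dkP (T : finType) (e : rel T) (k : nat) (x : T) (p : seq T) (a b : T) : nat :=
  if edge_on_path x p a b then 0
  else if dist_to_path e x p a < dist_to_path e x p b then nat_of_bool (d_oriented e k a b)
  else nat_of_bool (d_oriented e k b a).

(* sum over the edge set E, each undirected edge {a,b} counted once *)
Definition sum_dkP (T : finType) (e : rel T) (k : nat) (x : T) (p : seq T) : nat :=
  \sum_(a : T) \sum_(b : T | e a b && (enum_rank a < enum_rank b)) dkP e k x p a b.

(* Main.v *)
Require Import Defs.
From mathcomp Require Import all_boot all_order.
Set Implicit Arguments. Unset Strict Implicit. Unset Printing Implicit Defensive.

Lemma find_le (X : Type) (P : pred X) (s : seq X) x0 i :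
  i < size s -> P (nth x0 s i) -> find P s <= i.
Proof. move=> Hi HP; rewrite leqNgt; apply/negP => /(before_find x0); by rewrite HP. Qed.

Lemma walk_of_path (T : finType) (e : rel T) u p :
  path e u p -> walk_of_length e (size p) u (last u p).
Proof. move=> Hp; apply/existsP; exists (in_tuple p); by rewrite /= Hp eqxx. Qed.

Lemma gdist_le_walk (T : finType) (e : rel T) u v m :
  walk_of_length e m u v -> m < #|T| -> gdist e u v <= m.
Proof.
move=> Hw Hm; rewrite /gdist; apply: (find_le (x0 := 0)); first by rewrite size_iota.
by rewrite nth_iota.
Qed.

Lemma gdist_le_path (T : finType) (e : rel T) u p :
  path e u p -> gdist e u (last u p) <= size p.
Proof.
move=> Hp; case: (ltnP (size p) #|T|) => H.
  by apply: gdist_le_walk => //; apply: walk_of_path.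
apply: leq_trans H; rewrite /gdist; by have := find_size (fun m => walk_of_length e m u (last u p)) (iota 0 #|T|); rewrite size_iota.
Qed.

Lemma gdist_walk (T : finType) (e : rel T) u v :
  connect e u v -> walk_of_length e (gdist e u v) u v.
Proof.
case/connectP => p Hp ->.
case: (shortenP Hp) => p' Hp' Hu _.
have Hs : size p' < #|T|.
  by move/card_uniqP: Hu => /= <-; apply: max_card.
have Hh : has (fun m => walk_of_length e m u (last u p')) (iota 0 #|T|).
  apply/hasP; exists (size p'); first by rewrite mem_iota.
  exact: walk_of_path.
have Hf := Hh; rewrite has_find size_iota in Hf.
by have := nth_find 0 Hh; rewrite nth_iota // add0n.
Qed.
Lemma cut_sym (T : finType) (e : rel T) a b : symmetric e -> symmetric (cut_edge e a b).
Proof.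
move=> He c d; rewrite /cut_edge He.
by case: (c == a); case: (d == b); case: (c == b); case: (d == a).
Qed.

Lemma cut_sub (T : finType) (e : rel T) a b c d : cut_edge e a b c d -> e c d.
Proof. by case/andP. Qed.

Lemma bridge (T : finType) (e : rel T) u v :
  is_tree e -> e u v -> ~~ connect (cut_edge e u v) v u.
Proof.
case=> Hs Hi _ Hac Huv; apply/negP => H.
move: H; rewrite (sym_connect_sym (cut_sym u v Hs)).
case/connectP => p Hp Hl.
move: Hl; case: (shortenP Hp) => p' Hp' Hu _ Hl.
have Huv' : u != v by apply/eqP => E; move: Huv; rewrite E Hi.
have Hsz : 2 < size (u :: p').
  case: p' Hp' Hu Hl => [|a [|b q]] //=.
  + by move=> _ _ E; rewrite E eqxx in Huv'.
  + by move=> /andP[] /andP[_ H] _ _ E; rewrite -E !eqxx in H.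
move/negP: (Hac _ Hu Hsz); apply.
rewrite /= rcons_path -Hl Hs Huv andbT.
by apply: sub_path Hp' => c d; apply: cut_sub.
Qed.

Lemma cross (T : finType) (e : rel T) u v w w' :
  is_tree e -> e u v -> connect (cut_edge e u v) v w ->
  ~~ connect (cut_edge e u v) v w' -> (w == w') || e w w' -> w = v /\ w' = u.
Proof.
move=> Ht Huv Hw Hw' /orP[/eqP E|Hee]; first by rewrite -E Hw in Hw'.
case: (boolP (cut_edge e u v w w')) => Hc.
  by rewrite (connect_trans Hw (connect1 Hc)) in Hw'.
move: Hc; rewrite /cut_edge Hee /= negbK => /orP[/andP[/eqP Ewu _]|/andP[/eqP -> /eqP ->]] //.
by rewrite Ewu in Hw; have := bridge Ht Huv; rewrite Hw.
Qed.

Lemma cross2 (T : finType) (e : rel T) u v w w' :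
  is_tree e -> e u v -> ~~ connect (cut_edge e u v) v w ->
  connect (cut_edge e u v) v w' -> (w == w') || e w w' -> w = u /\ w' = v.
Proof.
move=> Ht Huv Hw Hw' H.
have [Hs _ _ _] := Ht.
have H' : (w' == w) || e w' w.
  by case/orP: H => [/eqP->|E]; [rewrite eqxx | rewrite Hs E orbT].
by case: (cross Ht Huv Hw' Hw H').
Qed.
Lemma eop_cons (T : finType) (a b x y : T) p : edge_on_path x (y::p) a b = [|| (a==x)&&(b==y), (b==x)&&(a==y) | edge_on_path y p a b].
Proof.
rewrite /edge_on_path /= (_ : prefix [::] p = true); last by case: p.
rewrite !andbT.
set A := (_ && prefix _ _) || _; set B := (_ && prefix _ _) || _.
clearbody A B; by case: (a==x); case: (b==y); case: (b==x); case: (a==y); case: A; case: B.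
Qed.

Lemma path_cut (T : finType) (e : rel T) a b x p :
  path e x p -> ~~ edge_on_path x p a b -> path (cut_edge e a b) x p.
Proof.
elim: p x => [|y p IH] x // /andP[Hxy Hp].
rewrite eop_cons => /norP[H1 /norP[H2 H3]].
have Hc : path (cut_edge e a b) y p by apply: IH.
rewrite /= Hc andbT /cut_edge Hxy /=.
move: H1 H2.
by rewrite ![x == _]eq_sym ![y == _]eq_sym => /negbTE -> /negbTE ->.
Qed.

Lemma split_cross (T : finType) (e : rel T) (P : pred T) a s :
  path e a s -> ~~ P a -> P (last a s) ->
  exists s1, exists b, exists s2,
    [/\ s = s1 ++ b :: s2, ~~ P (last a s1), P b & e (last a s1) b].
Proof.
elim: s a => [|c s IH] a /=; first by move=> _ /negbTE ->.
move=> /andP[Hac Hs] Ha.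
case: (boolP (P c)) => Hc.
  by move=> _; exists [::], c, s; split.
move=> /(IH c Hs Hc) [s1 [b [s2 [-> H1 H2 H3]]]].
by exists (c :: s1), b, s2; split.
Qed.

Lemma bigmin_le (T : eqType) (f : T -> nat) n s q :
  q \in s -> \big[minn/n]_(z <- s) f z <= f q.
Proof.
elim: s => [|a s IH] //; rewrite inE big_cons => /orP[/eqP->|Hq].
  exact: geq_minl.
exact: leq_trans (geq_minr _ _) (IH Hq).
Qed.

Lemma bigmin_ex (T : eqType) (f : T -> nat) n a s :
  (forall z, f z <= n) ->
  exists2 q, q \in a :: s & f q <= \big[minn/n]_(z <- a :: s) f z.
Proof.
move=> Hn; elim: s a => [|b s IH] a.
  exists a; first exact: mem_head.
  by rewrite big_cons big_nil leq_min leqnn Hn.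
rewrite big_cons; case: (leqP (f a) (\big[minn/n]_(z <- b :: s) f z)) => H.
  by exists a; [exact: mem_head | ].
have [q Hq Hfq] := IH b.
exists q; first by rewrite inE Hq orbT.
by [].
Qed.

From mathcomp Require Import zify.

Lemma gdist_le_card (T : finType) (e : rel T) u z : gdist e u z <= #|T|.
Proof.
rewrite /gdist; have := find_size (fun m => walk_of_length e m u z) (iota 0 #|T|).
by rewrite size_iota.
Qed.

Lemma notin_comp (T : finType) (e : rel T) x p u v q :
  is_tree e -> e u v -> path e x p -> ~~ edge_on_path x p u v ->
  dist_to_path e x p u <= dist_to_path e x p v -> q \in x :: p ->
  ~~ connect (cut_edge e u v) v q.
Proof.
move=> Ht Huv Hp Hne Hd Hq; apply/negP => Hvq.
have [Hs Hi Hc Hac] := Ht.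
have Hsym := sym_connect_sym (cut_sym u v Hs).
have Hpc := path_connect (path_cut Hp Hne).
have Hall : forall r, r \in x :: p -> connect (cut_edge e u v) v r.
  move=> r Hr; apply: (connect_trans Hvq); apply: (connect_trans (y := x)).
    by rewrite Hsym; exact: Hpc.
  exact: Hpc.
have [q0 Hq0 Hgd] := @bigmin_ex _ (fun z => gdist e u z) #|T| x p (gdist_le_card e u).
have /existsP [t /andP [Ht1 /eqP Ht2]] := gdist_walk (Hc u q0).
have := split_cross (P := connect (cut_edge e u v) v) Ht1 (bridge Ht Huv).
rewrite Ht2 => /(_ (Hall _ Hq0)) [s1 [b [s2 [Eq H1 H2 H3]]]].
have [_ Eb] := cross2 Ht Huv H1 H2 (introT orP (or_intror H3)).
have Hs2 : path e b s2 by move: Ht1; rewrite Eq cat_path => /andP[_ /= /andP[_]].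
have Hl : last b s2 = q0 by move: Ht2; rewrite Eq last_cat.
have Hg := gdist_le_path Hs2; rewrite Hl Eb in Hg.
have Hsz : size t = gdist e u q0 := size_tuple t.
rewrite Eq size_cat /= in Hsz.
have := bigmin_le (fun z => gdist e v z) #|T| Hq0.
move: Hd Hgd; rewrite /dist_to_path.
move=> A B C; have := leq_trans (leq_trans (leq_trans B A) C) Hg; clear A B C; lia.
Qed.

Lemma path_induced_sub (T : finType) (e : rel T) (A : seq T) a q :
  path (induced e A) a q -> all (mem A) q.
Proof.
elim: q a => [|b q IH] a //= /andP [/and3P [_ _ Hb] Hq].
by rewrite Hb (IH b Hq).
Qed.

Lemma sub_path_induced (T : finType) (e : rel T) (A : seq T) a q :
  path (induced e A) a q -> path e a q.
Proof. by apply: sub_path => c d /and3P []. Qed.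

Lemma ivt (P : nat -> bool) a b :
  a <= b -> P a -> ~~ P b -> exists t, [/\ a <= t, t < b, P t & ~~ P t.+1].
Proof.
elim: b => [|b IH] Hab Pa Pb.
  by move: Hab; rewrite leqn0 => /eqP E; rewrite E in Pa; rewrite Pa in Pb.
case: (ltnP b a) => Hba.
  have E : a = b.+1 by apply/eqP; rewrite eqn_leq Hab.
  by rewrite E in Pa; rewrite Pa in Pb.
case: (boolP (P b)) => Hb; first by exists b; split.
have [t [H1 H2 H3 H4]] := IH Hba Pa Hb.
by exists t; split => //; apply: ltn_trans H2 _.
Qed.

Lemma exit_agent (T : finType) (e : rel T) u v k (C D : k.-tuple T) :
  is_tree e -> e u v -> config_adj e C D ->
  all (connect (cut_edge e u v) v) C -> ~~ all (connect (cut_edge e u v) v) D ->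
  exists i, tnth C i = v /\ tnth D i = u.
Proof.
move=> Ht Huv /forallP Hadj HC /allPn [w' Hw' Hn].
case/tnthP: Hw' => i Ei.
exists i; apply: (cross Ht Huv) => //.
  by apply: (allP HC); exact: mem_tnth.
by rewrite -Ei.
Qed.

Lemma enter_agent (T : finType) (e : rel T) u v k (C D : k.-tuple T) :
  is_tree e -> e u v -> config_adj e C D ->
  ~~ all (connect (cut_edge e u v) v) C -> all (connect (cut_edge e u v) v) D ->
  exists i, tnth C i = u.
Proof.
move=> Ht Huv /forallP Hadj /allPn [w Hw Hn] HD.
case/tnthP: Hw => i Ei.
exists i; have [] := cross2 Ht Huv (w' := tnth D i) _ _ (Hadj i) => //.
  by rewrite -Ei.
by apply: (allP HD); exact: mem_tnth.
Qed.

Unset Implicit Arguments.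

Theorem mainTheorem5 (T : finType) (e : rel T) (k : nat)
    (c0 : k.-tuple T) (s : seq (k.-tuple T)) (x y : T) (p : seq T) :
  is_tree e ->
  1 <= k -> k <= #|T| ->
  optimal_walk e c0 s ->
  (forall z : T, first_occ c0 s z <= first_occ c0 s y) ->
  x \in c0 ->
  (forall x' : T, x' \in c0 -> gdist e x' y <= gdist e x y) ->
  is_simple_path e x y p ->
  (#|T| - k) + sum_dkP e k x p <= size s.
Proof.
move=> Ht Hk1 Hkn [Hw Hsp _] Hy Hx0 _ [Hp Hlast Hup].
have [Hsym Hirr Hconn Hac] := Ht.
move: Hw => /andP [Hcfg Hpath].
pose C t := nth c0 (c0 :: s) t.
have Hstep : forall t, t < size s -> rstep e (C t) (C t.+1).
  by move=> t Ht'; apply: (pathP c0 Hpath).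
have Hconf : forall t, t <= size s -> is_config e (C t).
  by move=> t Ht'; apply: (allP Hcfg); apply: mem_nth; rewrite /= ltnS.
have Hocc : forall z, first_occ c0 s z <= size s /\ z \in C (first_occ c0 s z).
  move=> z; have Hh := Hsp z; split.
    by move: Hh; rewrite has_find /= ltnS.
  exact: (nth_find c0 Hh).
have Hbef : forall z t, t < first_occ c0 s z -> z \notin C t.
  by move=> z t Ht'; apply/negbT; apply: (before_find c0 Ht').
have Hnew : forall t z z', t < size s -> z \in C t.+1 -> z \notin C t ->
    z' \in C t.+1 -> z' \notin C t -> z = z'.
  move=> t z z' Ht' H1 H2 H3 H4.
  have /andP [_ /cards1P [w Ew]] := Hstep t Ht'.
  have : z \in [set z0 | (z0 \in C t.+1) && (z0 \notin C t)] by rewrite inE H1 H2.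
  have : z' \in [set z0 | (z0 \in C t.+1) && (z0 \notin C t)] by rewrite inE H3 H4.
  by rewrite Ew !inE => /eqP -> /eqP ->.
have Huc0 : uniq c0 by have /andP [] := Hconf 0 (leq0n _).
pose A := [set z | z \notin c0].
have HA : #|T| - k <= #|A|.
  have Hc0 : #|[set z | z \in c0]| = k.
    by rewrite cardsE; move/card_uniqP: Huc0 => ->; rewrite size_tuple.
  have EA : A = ~: [set z | z \in c0] by apply/setP => z; rewrite !inE.
  have := cardsC [set z | z \in c0]; rewrite -EA Hc0; lia.
pose fA z := (first_occ c0 s z).-1.
have HfA : forall z, z \in A -> fA z < size s /\ (fA z).+1 = first_occ c0 s z.
  move=> z; rewrite inE => Hz; have [H1 H2] := Hocc z.
  have Hn0 : first_occ c0 s z != 0.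
    by apply/eqP => E; rewrite E in H2; rewrite H2 in Hz.
  rewrite /fA prednK ?lt0n //; split => //.
have HfAin : forall z, z \in A -> z \in C (fA z).+1 /\ z \notin C (fA z).
  move=> z Hz; have [_ E] := HfA z Hz; split; first by rewrite E; exact: (Hocc z).2.
  by apply: Hbef; rewrite -E.
have HfA_inj : {in enum A &, injective fA}.
  move=> z z'; rewrite !mem_enum => Hz Hz' E.
  have [Hlt _] := HfA z Hz; have [H1 H2] := HfAin z Hz; have [H3 H4] := HfAin z' Hz'.
  rewrite -E in H3 H4.
  exact: (Hnew _ _ _ Hlt H1 H2 H3 H4).
pose dP w := dist_to_path e x p w.
pose orient (ab : T * T) := if dP ab.1 < dP ab.2 then ab else (ab.2, ab.1).
pose B := [set ab : T * T | [&& e ab.1 ab.2, enum_rank ab.1 < enum_rank ab.2 &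
                                dkP e k x p ab.1 ab.2 == 1]].
pose ins u v t := all (connect (cut_edge e u v) v) (C t).
pose Q (ab : T * T) t := ins (orient ab).1 (orient ab).2 t && ~~ ins (orient ab).1 (orient ab).2 t.+1.
pose fB ab := find (Q ab) (iota 0 (size s)).
have HBprop : forall ab, ab \in B ->
    [/\ e (orient ab).1 (orient ab).2, ~~ edge_on_path x p (orient ab).1 (orient ab).2,
        dP (orient ab).1 <= dP (orient ab).2 & d_oriented e k (orient ab).1 (orient ab).2].
  move=> [a b]; rewrite inE /= => /and3P [Hab _].
  rewrite /dkP /orient /dP /=; case: ifP => Hon //.
  case: ifP => Hlt /=.
    by case: (d_oriented e k a b) => //= _; split => //; [rewrite Hon | exact: ltnW].
  case: (d_oriented e k b a) => //= _; split => //.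
  - by rewrite Hsym.
  - by rewrite /edge_on_path orbC; move: Hon; rewrite /edge_on_path => ->.
  - by rewrite leqNgt Hlt.
have Hxy : forall u v, e u v -> ~~ edge_on_path x p u v -> dP u <= dP v ->
    ~~ connect (cut_edge e u v) v x /\ ~~ connect (cut_edge e u v) v y.
  move=> u v Huv Hne Hd; split; apply: (notin_comp Ht Huv Hp Hne Hd).
    exact: mem_head.
  by rewrite -Hlast mem_last.
have HBstep : forall ab, ab \in B ->
    [/\ fB ab < size s, ins (orient ab).1 (orient ab).2 (fB ab)
      & ~~ ins (orient ab).1 (orient ab).2 (fB ab).+1].
  move=> ab HB; have [Huv Hne Hd /existsP [z /andP [Hvz Hkz]]] := HBprop ab HB.
  move: Huv Hne Hd Hvz Hkz; rewrite /fB /Q.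
  case: (orient ab) => u v /= Huv Hne Hd Hvz Hkz.
  have [Htz Hztz] := Hocc z.
  have /andP [Hutz Hcz] := Hconf _ Htz.
  have HuC : u \notin C (first_occ c0 s z).
    apply/negP => Hu.
    have /connectP [q Hq Eq] := implyP (implyP (forallP (forallP Hcz u) z) Hu) Hztz.
    move: Eq; case: (shortenP Hq) => q' Hq' Huq' _ Eq.
    have Hsub := path_induced_sub Hq'.
    have Hsz : size (u :: q') <= size (C (first_occ c0 s z)).
      apply: uniq_leq_size Huq' _ => w; rewrite inE => /orP [/eqP -> // | Hw].
      exact: (allP Hsub).
    rewrite size_tuple /= in Hsz.
    have := gdist_le_path (sub_path_induced Hq'); rewrite -Eq => Hg.
    by have := leq_trans Hsz (leq_trans Hkz Hg); rewrite ltnn.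
  have Hin : ins u v (first_occ c0 s z).
    apply/allP => w Hw.
    apply: (connect_trans Hvz).
    have Hzw := implyP (implyP (forallP (forallP Hcz z) w) Hztz) Hw.
    apply: (connect_sub _ Hzw) => a b /and3P [Hab Ha Hb]; apply: connect1.
    rewrite /cut_edge Hab /=.
    by apply/negP => /orP [/andP [/eqP Ea _] | /andP [_ /eqP Eb]];
      [rewrite -Ea Ha in HuC | rewrite -Eb Hb in HuC].
  have [Hty Hyty] := Hocc y.
  have Hout : ~~ ins u v (first_occ c0 s y).
    apply/allPn; exists y => //; exact: (Hxy u v Huv Hne Hd).2.
  have [t [H1 H2 H3 H4]] := ivt (Hy z) Hin Hout.
  have Hh : has (fun t => ins u v t && ~~ ins u v t.+1) (iota 0 (size s)).
    apply/hasP; exists t; last by rewrite H3 H4.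
    by rewrite mem_iota add0n /= (leq_trans H2 Hty).
  have Hf := Hh; rewrite has_find size_iota in Hf.
  by have := nth_find 0 Hh; rewrite nth_iota // add0n => /andP [-> ->].
have Hadj : forall t, t < size s -> config_adj e (C t) (C t.+1).
  by move=> t Ht'; have /andP [] := Hstep t Ht'.
have HBfacts : forall ab, ab \in B ->
  [/\ (exists i, tnth (C (fB ab)) i = (orient ab).2 /\ tnth (C (fB ab).+1) i = (orient ab).1),
      (orient ab).1 \in C (fB ab).+1, (orient ab).1 \notin C (fB ab) &
      exists2 j, j < fB ab & (orient ab).1 \in C j].
  move=> ab HB; have [Huv Hne Hd _] := HBprop ab HB; have [Hlt Hi Ho] := HBstep ab HB.
  move: (fB ab) Hlt Hi Ho => t Hlt Hi Ho.
  move: Huv Hne Hd Hi Ho; case: (orient ab) => u v /= Huv Hne Hd Hi Ho.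
  have [i [E1 E2]] := exit_agent Ht Huv (Hadj t Hlt) Hi Ho.
  have HuC : u \in C t.+1 by rewrite -E2 mem_tnth.
  have HuC' : u \notin C t.
    by apply/negP => Hu; have := allP Hi u Hu; apply/negP; exact: bridge Ht Huv.
  have Hn0 : ~~ ins u v 0.
    apply/allPn; exists x; first exact: Hx0.
    exact: (Hxy u v Huv Hne Hd).1.
  have [j [_ Hj H3 H4]] := ivt (P := fun j => ~~ ins u v j) (leq0n t) Hn0 (introT negPn Hi).
  have [i' Ei'] := enter_agent Ht Huv (Hadj j (ltn_trans Hj Hlt)) H3 (negbNE H4).
  split => //; first by exists i.
  by exists j => //; rewrite -Ei' mem_tnth.
have Horient : forall ab ab', ab \in B -> ab' \in B -> orient ab = orient ab' -> ab = ab'.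
  move=> [a b] [a' b']; rewrite !inE /= => /and3P [_ Hr _] /and3P [_ Hr' _].
  rewrite /orient /=; case: ifP => _; case: ifP => _ [E1 E2]; subst => //.
  - by have := ltn_trans Hr Hr'; rewrite ltnn.
  - by have := ltn_trans Hr Hr'; rewrite ltnn.
have HfB_inj : {in enum B &, injective fB}.
  move=> ab ab'; rewrite !mem_enum => HB HB' E.
  suff Eo : orient ab = orient ab' by exact: (Horient ab ab' HB HB' Eo).
  have [[i [Ei1 Ei2]] Hu1 Hu2 _] := HBfacts ab HB.
  have [[i' [Ei1' Ei2']] Hu1' Hu2' _] := HBfacts ab' HB'.
  rewrite -E in Ei1' Ei2' Hu1' Hu2'.
  have [Hlt _ _] := HBstep ab HB.
  have Eu := Hnew _ _ _ Hlt Hu1 Hu2 Hu1' Hu2'.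
  have /tuple_uniqP Hinj : uniq (C (fB ab).+1) by have /andP [] := Hconf _ Hlt.
  have Eii : i = i' by apply: Hinj; rewrite Ei2 Ei2'.
  apply: injective_projections => //.
  by rewrite -Ei1 -Ei1' Eii.
have Hdisj : forall z ab, z \in A -> ab \in B -> fA z != fB ab.
  move=> z ab Hz HB; apply/eqP => E.
  have [_ Hfirst] := HfA z Hz; have [H1 H2] := HfAin z Hz.
  rewrite E in H1 H2 Hfirst.
  have [_ Hu1 Hu2 [j Hj Huj]] := HBfacts ab HB.
  have [Hlt _ _] := HBstep ab HB.
  have Ezu := Hnew _ _ _ Hlt H1 H2 Hu1 Hu2.
  have : j < first_occ c0 s z by rewrite -Hfirst; exact: ltnW.
  by rewrite Ezu => /Hbef; rewrite Huj.
have Hdk1 : forall a b, dkP e k x p a b <= 1.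
  by move=> a b; rewrite /dkP; case: ifP => // _; case: ifP => _; exact: leq_b1.
have Hsum : sum_dkP e k x p <= #|B|.
  rewrite /sum_dkP.
  under eq_bigr do rewrite big_mkcond.
  rewrite pair_big /= -(sum1_card (mem B)) [X in _ <= X]big_mkcond /=.
  apply: leq_sum => [[a b]] _ /=.
  rewrite inE /=; case: (e a b) => //=; case: (enum_rank a < enum_rank b) => //=.
  by have := Hdk1 a b; case: (dkP e k x p a b) => [|[|]].
pose L := map fA (enum A) ++ map fB (enum B).
have HL : uniq L.
  rewrite cat_uniq !map_inj_in_uniq ?enum_uniq //= andbT.
  apply/hasPn => t /mapP [ab Hab ->]; apply/negP => /mapP [z Hz E].
  rewrite mem_enum in Hab; rewrite mem_enum in Hz.
  by have := Hdisj z ab Hz Hab; rewrite E eqxx.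
have HLs : {subset L <= iota 0 (size s)}.
  move=> t; rewrite mem_cat mem_iota add0n /= => /orP [/mapP [z Hz ->] | /mapP [ab Hab ->]];
    [rewrite mem_enum in Hz | rewrite mem_enum in Hab].
    exact: (HfA z Hz).1.
  by case: (HBstep ab Hab).
have := uniq_leq_size HL HLs; rewrite size_iota size_cat !size_map -!cardE.
by apply: leq_trans; exact: leq_add HA Hsum.
Qed.
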